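(* Let $1<p<\infty$ and let $w:\mathbb N_0\to(0,\infty)$ satisfy $w(n_1)\le w(n_2)$ for $n_1<n_2$ and $\lim_{n\to\infty}w(n)=\infty$. Suppose there is a non-negative, decreasing $f\in C^1[0,\infty)$ with $f(0)=1$ and constants $\tau_0>0$, $C_w>0$ such that $$\sum_{n\in\mathbb N_0}w(n)f(\tau w(n))\le C_w\tau^{-1}\quad\forall\tau\in(0,\tau_0].$$ Set $X=\ell^p(w)$, $V=\ell^1$, $U=\ell^\infty(w)$, $a=\frac1{p-1}$, $X_s=\ell^{p_s}(w)$ with $p_s=\frac{p}{1+s(p-1)}$ for $s\in[0,1]$, $t_0=\tau_0^{1/(1+a)}$, and $(P_tx)(n)=f(t^{a+1}w(n))x(n)$ for $x\in\ell^p(w)$, $t\in(0,t_0]$. Then: (i) the embeddings $V\hookrightarrow X\hookrightarrow U$ are continuous; (ii) $X_0=X$, $X_1=V$, and $X_s\hookrightarrow X_t$ continuously for $0\le t\le s\le1$; (iii) for all $s\in(0,1]$ and $r\in[0,s)$ there is $L>0$ with $\|x\|_{X_r}\le L\|x\|_{X_s}^{\frac{r+a}{a+s}}\|x\|_U^{\frac{s-r}{a+s}}$ for all $x\in X_s$; (iv) for all $s\in[0,1]$ and $t\in(0,t_0]$, $P_tX_s\subset X_s$ and $C_P:=\sup_{0<t\le t_0}\|P_t\|_{X_s\to X_s}<\infty$, and for each $x\in X$ the map $t\mapsto P_tx$ is continuous from $(0,t_0]$ into $X$; (v) for every $0<s<1$ there is $C_{Proj}\ge C_P+1$ such that for all $0<t\le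 t_0$, $\|P_t-\mathrm{id}\|_{X_s\to U}\le C_{Proj}t^{a+s}$ and $\|P_t\|_{X_s\to V}\le C_{Proj}t^{s-1}$.
   Context: For $w:\mathbb N_0\to(0,\infty)$ and $1\le p<\infty$, $\ell^p(w)$ is the space of sequences $x=\{x(n)\}_{n\ge0}$ with $\|x\|_{\ell^p(w)}=\big(\sum_{n\in\mathbb N_0}w(n)^{1-p}|x(n)|^p\big)^{1/p}<\infty$ (so $\ell^1(w)=\ell^1$), and $\ell^\infty(w)$ is the space of sequences with $\|x\|_{\ell^\infty(w)}=\sup_{n}|w(n)^{-1}x(n)|<\infty$. *)

(* Defs.v *)
From Stdlib Require Export Reals.
From Coquelicot Require Export Coquelicot.
Open Scope R_scope.

(* x ^ y for x >= 0 and any real y, with the convention 0 ^ y = 0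
   (only used with y > 0 or x > 0). *)
Definition rpow (x y : R) : R :=
  if Req_EM_T x 0 then 0 else Rpower x y.

Definition lp_term (q : R) (w x : nat -> R) (n : nat) : R :=
  Rpower (w n) (1 - q) * rpow (Rabs (x n)) q.
Definition in_lp (q : R) (w : nat -> R) (x : nat -> R) : Prop :=
  ex_series (lp_term q w x).
Definition lp_norm (q : R) (w : nat -> R) (x : nat -> R) : R :=
  rpow (Series (lp_term q w x)) (/ q).

Definition in_l1 (x : nat -> R) : Prop := ex_series (fun n => Rabs (x n)).
Definition l1_norm (x : nat -> R) : R := Series (fun n => Rabs (x n)).

Definition in_linf (w : nat -> R) (x : nat -> R) : Prop :=
  exists M, forall n, Rabs (x n / w n) <= M.
Definition linf_norm (w : nat -> R) (x : nat -> R) : R :=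
  real (Sup_seq (fun n => Rabs (x n / w n))).

Definition cont_embed (memA : (nat -> R) -> Prop) (nA : (nat -> R) -> R)
    (memB : (nat -> R) -> Prop) (nB : (nat -> R) -> R) : Prop :=
  (forall x, memA x -> memB x) /\
  exists C, 0 <= C /\ forall x, memA x -> nB x <= C * nA x.

Definition op_bounded_by (memA : (nat -> R) -> Prop) (nA : (nat -> R) -> R)
    (memB : (nat -> R) -> Prop) (nB : (nat -> R) -> R)
    (T : (nat -> R) -> (nat -> R)) (c : R) : Prop :=
  forall x, memA x -> memB (T x) /\ nB (T x) <= c * nA x.

(* operator norm ||T||_{A -> B} = inf { c >= 0 | ||Tx|| <= c ||x|| },
   = +oo if T does not map A boundedly into B *)
Definition opnorm (memA : (nat -> R) -> Prop) (nA : (nat -> R) -> R)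
    (memB : (nat -> R) -> Prop) (nB : (nat -> R) -> R)
    (T : (nat -> R) -> (nat -> R)) : Rbar :=
  Glb_Rbar (fun c => 0 <= c /\ op_bounded_by memA nA memB nB T c).

Definition C1_nonneg (f : R -> R) : Prop :=
  exists df : R -> R,
    (forall x, 0 <= x ->
       filterlim (fun y => (f y - f x) / (y - x))
         (within (fun y => 0 <= y /\ y <> x) (locally x)) (locally (df x))) /\
    (forall x, 0 <= x ->
       filterlim df (within (fun y => 0 <= y) (locally x)) (locally (df x))).

Definition a_exp (p : R) : R := / (p - 1).
Definition p_s (p s : R) : R := p / (1 + s * (p - 1)).
Definition t0_of (p tau0 : R) : R := Rpower tau0 (/ (1 + a_exp p)).

Definition P_op (f : R -> R) (w : nat -> R) (p t : R) (x : nat -> R) : nat -> R :=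
  fun n => f (Rpower t (a_exp p + 1) * w n) * x n.

(* C_P(s) = sup_{0<t<=t0} ||P_t||_{X_s -> X_s} (over the finite values) *)
Definition CP_sup (f : R -> R) (w : nat -> R) (p t0 s : R) : Rbar :=
  Lub_Rbar (fun c => exists t, 0 < t <= t0 /\
     opnorm (in_lp (p_s p s) w) (lp_norm (p_s p s) w)
            (in_lp (p_s p s) w) (lp_norm (p_s p s) w) (P_op f w p t) = Finite c).

(* Main.v *)
Require Import Defs.
From Stdlib Require Import Reals Lra Lia.
From Coquelicot Require Import Coquelicot.
Open Scope R_scope.

Lemma rpow_0 y : rpow 0 y = 0.
Proof. unfold rpow; destruct (Req_EM_T 0 0); [reflexivity| congruence]. Qed.

Lemma rpow_pos x y : 0 < x -> rpow x y = Rpower x y.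
Proof. intros; unfold rpow; destruct (Req_EM_T x 0); [lra|reflexivity]. Qed.

Lemma Rpower_gt0 x y : 0 < Rpower x y.
Proof. unfold Rpower; apply exp_pos. Qed.

Lemma rpow_ge0 x y : 0 <= rpow x y.
Proof. unfold rpow; destruct (Req_EM_T x 0); [lra|]. left; apply Rpower_gt0. Qed.

Lemma rpow_gt0 x y : 0 < x -> 0 < rpow x y.
Proof. intros; rewrite rpow_pos; auto; apply Rpower_gt0. Qed.

Lemma rpow_mult a b y : 0 <= a -> 0 <= b -> rpow (a*b) y = rpow a y * rpow b y.
Proof.
  intros Ha Hb. destruct Ha as [Ha|<-]; [|rewrite Rmult_0_l, !rpow_0; ring].
  destruct Hb as [Hb|<-]; [|rewrite Rmult_0_r, !rpow_0; ring].
  rewrite !rpow_pos; auto. now rewrite Rpower_mult_distr. now apply Rmult_lt_0_compat.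
Qed.

Lemma rpow_plus a y z : 0 <= a -> rpow a (y+z) = rpow a y * rpow a z.
Proof.
  intros [Ha|<-]; [|rewrite !rpow_0; ring]. rewrite !rpow_pos; auto. apply Rpower_plus.
Qed.

Lemma rpow_rpow a y z : 0 <= a -> rpow (rpow a y) z = rpow a (y*z).
Proof.
  intros [Ha|<-]; [|rewrite !rpow_0; ring]. rewrite (rpow_pos a); auto.
  rewrite !rpow_pos; auto. apply Rpower_mult. apply Rpower_gt0.
Qed.

Lemma rpow_1 a : 0 <= a -> rpow a 1 = a.
Proof. intros [Ha|<-]; [|apply rpow_0]. rewrite rpow_pos; auto. apply Rpower_1; auto. Qed.

Lemma rpow_le a b e : 0 <= e -> 0 <= a <= b -> rpow a e <= rpow b e.
Proof.
  intros He [[Ha|<-] Hab]; [|rewrite rpow_0; apply rpow_ge0].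
  rewrite !rpow_pos; try lra. apply Rle_Rpower_l; lra.
Qed.

Lemma rpow_lt a b e : 0 < e -> 0 <= a < b -> rpow a e < rpow b e.
Proof.
  intros He [[Ha|<-] Hab]; [|rewrite rpow_0; apply rpow_gt0; lra].
  rewrite !rpow_pos; try lra. apply Rlt_Rpower_l; lra.
Qed.

Lemma rpow_le_self z e : 0 <= z <= 1 -> 1 <= e -> rpow z e <= z.
Proof.
  intros [[Hz|<-] Hz1] He; [|rewrite rpow_0; lra].
  rewrite rpow_pos; auto. unfold Rpower.
  rewrite <- (exp_ln z) at 2; auto.
  assert (Hl : ln z <= 0).
  { destruct Hz1 as [H1|H1]; [|rewrite H1, ln_1; lra]. rewrite <- ln_1; left; apply ln_increasing; lra. }
  assert (e * ln z <= ln z) by nra.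
  destruct H as [H|H]; [left; apply exp_increasing; auto| rewrite H; lra].
Qed.

Lemma rpow_eq0 a y : 0 <= a -> rpow a y = 0 -> a = 0.
Proof. intros [Ha|<-] H; auto. pose proof (rpow_gt0 a y Ha); lra. Qed.

Lemma rpow_inv a q : 0 <= a -> q <> 0 -> rpow (rpow a q) (/ q) = a.
Proof. intros Ha Hq. rewrite rpow_rpow; auto. rewrite Rinv_r; auto. apply rpow_1; auto. Qed.

Lemma Series_zero : Series (fun _ => 0) = 0.
Proof. transitivity (Series (fun n:nat => 0 * 0)); [apply Series_ext; intros; ring| rewrite Series_scal_l; ring]. Qed.

Lemma Series_ge0 a : (forall n, 0 <= a n) -> ex_series a -> 0 <= Series a.
Proof.
  intros H He. rewrite <- Series_zero. apply Series_le; auto. intros; split; [lra|auto].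
Qed.

Lemma sum_f_ge0 a n : (forall k, 0 <= a k) -> 0 <= sum_f_R0 a n.
Proof. intros H; induction n; simpl; [apply H|]. specialize (H (S n)); lra. Qed.

Lemma sum_f_ge_term a n : (forall k, 0 <= a k) -> a n <= sum_f_R0 a n.
Proof.
  intros H. destruct n; simpl; [lra|].
  pose proof (sum_f_ge0 a n H). lra.
Qed.

Lemma term_le_Series a n : (forall k, 0 <= a k) -> ex_series a -> a n <= Series a.
Proof.
  intros H He. rewrite (Series_incr_n a (S n)); [|lia|auto]. simpl.
  pose proof (sum_f_ge_term a n H).
  assert (0 <= Series (fun k => a (S (n + k)))).
  { apply Series_ge0; auto. apply (ex_series_incr_n a (S n)) in He. exact He. }
  lra.
Qed.

Lemma sup_props (u : nat -> R) B : (forall n, 0 <= u n <= B) ->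
  (forall n, u n <= real (Sup_seq u)) /\ real (Sup_seq u) <= B.
Proof.
  intros H.
  assert (H1 : forall n, Rbar_le (u n) (Sup_seq u)) by (intro n; apply (Sup_seq_minor_le u (u n) n); simpl; apply Rle_refl).
  assert (H2 : Rbar_le (Sup_seq u) B).
  { replace (Finite B) with (Sup_seq (fun _ => Finite B)).
    - apply Sup_seq_le. intro n; simpl; apply H.
    - apply is_sup_seq_unique. intros eps; split.
      + intros n; simpl; destruct eps; simpl; lra.
      + exists 0%nat; simpl; destruct eps; simpl; lra. }
  pose proof (H1 0%nat) as H0.
  destruct (Sup_seq u) as [l| |]; simpl in *; try tauto.
Qed.

Lemma lp_term_eq q w x n : 0 < w n -> lp_term q w x n = w n * rpow (Rabs (x n) / w n) q.
Proof.
  intros Hw. unfold lp_term, Rdiv.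
  rewrite rpow_mult; [|apply Rabs_pos|left; apply Rinv_0_lt_compat; auto].
  rewrite (rpow_pos (/ w n)); [|apply Rinv_0_lt_compat; auto].
  assert (E1 : Rpower (/ w n) q = Rpower (w n) (- q)).
  { unfold Rpower. rewrite ln_Rinv; auto. f_equal; ring. }
  assert (E2 : Rpower (w n) (1 - q) = w n * Rpower (w n) (- q)).
  { unfold Rminus; rewrite Rpower_plus, Rpower_1; auto. }
  rewrite E1, E2. ring.
Qed.

Lemma lp_term_ge0 q w x n : 0 <= lp_term q w x n.
Proof. unfold lp_term. apply Rmult_le_pos; [left; apply Rpower_gt0| apply rpow_ge0]. Qed.

Lemma lp_norm_ge0 q w x : 0 <= lp_norm q w x.
Proof. apply rpow_ge0. Qed.

Lemma Series_lp_ge0 q w x : in_lp q w x -> 0 <= Series (lp_term q w x).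
Proof. intros H; apply Series_ge0; auto; intros; apply lp_term_ge0. Qed.

Lemma y_bound q w x n : (forall n, 0 < w n) -> (forall n, w 0%nat <= w n) -> 0 < q ->
  in_lp q w x -> Rabs (x n) / w n <= rpow (/ w 0%nat) (/ q) * lp_norm q w x.
Proof.
  intros Hw Hw0 Hq Hx.
  set (S := Series (lp_term q w x)).
  assert (HS : 0 <= S) by (apply Series_lp_ge0; auto).
  pose proof (term_le_Series (lp_term q w x) n (lp_term_ge0 q w x) Hx) as H.
  fold S in H. rewrite lp_term_eq in H; auto.
  set (y := Rabs (x n) / w n) in *.
  assert (Hy : 0 <= y) by (unfold y; apply Rmult_le_pos; [apply Rabs_pos| left; apply Rinv_0_lt_compat; auto]).
  assert (H1 : rpow y q <= S * / w 0%nat).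
  { pose proof (Hw n); pose proof (Hw 0%nat); pose proof (Hw0 n).
    apply Rmult_le_reg_l with (w n); auto.
    apply Rle_trans with S; auto.
    assert (Hk : w 0%nat * / w 0%nat = 1) by (apply Rinv_r; lra).
    assert (0 < / w 0%nat) by (apply Rinv_0_lt_compat; lra).
    set (k := / w 0%nat) in *.
    assert (0 <= S * k * (w n - w 0%nat)) by (apply Rmult_le_pos; [apply Rmult_le_pos; lra | lra]).
    assert (E : S * k * w 0%nat = S) by (rewrite Rmult_assoc, (Rmult_comm k), Hk; ring).
    assert (E2 : w n * (S * k) = S * k * w n) by ring. lra. }
  rewrite <- (rpow_inv y q); auto; [|lra].
  apply Rle_trans with (rpow (S * / w 0%nat) (/ q)).
  { apply rpow_le; [left; apply Rinv_0_lt_compat; auto|]. split; auto. apply rpow_ge0. }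
  rewrite rpow_mult; auto; [|left; apply Rinv_0_lt_compat; auto]. unfold lp_norm; fold S. lra.
Qed.

Lemma interp q r w x M : (forall n, 0 < w n) -> 0 < q -> q <= r -> in_lp q w x -> 0 <= M ->
  (forall n, Rabs (x n) / w n <= M) ->
  in_lp r w x /\ lp_norm r w x <= rpow M (1 - q / r) * rpow (lp_norm q w x) (q / r).
Proof.
  intros Hw Hq Hqr Hx HM HyM.
  assert (Hpt : forall n, lp_term r w x n <= rpow M (r - q) * lp_term q w x n).
  { intros n. rewrite !lp_term_eq; auto.
    set (y := Rabs (x n) / w n) in *.
    assert (Hy : 0 <= y) by (unfold y; apply Rmult_le_pos; [apply Rabs_pos| left; apply Rinv_0_lt_compat; auto]).
    replace r with (q + (r - q)) at 1 by ring. rewrite rpow_plus; auto.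
    pose proof (rpow_le y M (r - q) ltac:(lra) (conj Hy (HyM n))).
    pose proof (rpow_ge0 y q). pose proof (Hw n). pose proof (rpow_ge0 y (r-q)).
    assert (0 <= w n * rpow y q) by (apply Rmult_le_pos; lra).
    nra. }
  assert (Hex : ex_series (fun n => rpow M (r - q) * lp_term q w x n)).
  { apply (ex_series_scal_l (rpow M (r - q))) in Hx. exact Hx. }
  assert (Hr : in_lp r w x).
  { unfold in_lp. apply (ex_series_le (lp_term r w x) (fun n => rpow M (r - q) * lp_term q w x n)); [|exact Hex].
    intros n. change norm with Rabs; simpl. rewrite Rabs_pos_eq by apply lp_term_ge0.
    apply Hpt. }
  split; auto.
  assert (HS : Series (lp_term r w x) <= rpow M (r - q) * Series (lp_term q w x)).
  { rewrite <- Series_scal_l. apply Series_le; auto. intros n; split; [apply lp_term_ge0| apply Hpt]. }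
  unfold lp_norm.
  apply Rle_trans with (rpow (rpow M (r - q) * Series (lp_term q w x)) (/ r)).
  { apply rpow_le; [left; apply Rinv_0_lt_compat; lra|]. split; auto. apply Series_lp_ge0; auto. }
  rewrite rpow_mult; [|apply rpow_ge0|apply Series_lp_ge0; auto].
  rewrite !rpow_rpow; auto; [|apply Series_lp_ge0; auto].
  replace ((r - q) * / r) with (1 - q / r) by (field; lra).
  replace (/ q * (q / r)) with (/ r) by (field; lra). lra.
Qed.

Lemma absdiv a b : 0 < b -> Rabs (a / b) = Rabs a / b.
Proof. intros Hb. unfold Rdiv. rewrite Rabs_mult, Rabs_inv, (Rabs_pos_eq b); lra. Qed.

Lemma y_ge0 x (w : nat -> R) n : 0 < w n -> 0 <= Rabs (x n) / w n.
Proof. intros; apply Rmult_le_pos; [apply Rabs_pos| left; apply Rinv_0_lt_compat; auto]. Qed.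

Lemma linf_of_bound w x B : (forall n, 0 < w n) -> (forall n, Rabs (x n) / w n <= B) ->
  in_linf w x /\ (forall n, Rabs (x n) / w n <= linf_norm w x) /\ linf_norm w x <= B.
Proof.
  intros Hw HB. split; [exists B; intros n; rewrite absdiv; auto|].
  assert (H : forall n, 0 <= Rabs (x n / w n) <= B).
  { intros n; rewrite absdiv; auto. split; [apply y_ge0; auto| auto]. }
  destruct (sup_props _ _ H) as [H1 H2]. unfold linf_norm. split; auto.
  intros n; rewrite <- absdiv; auto.
Qed.

Lemma linf_of_lp q w x : (forall n, 0 < w n) -> (forall n, w 0%nat <= w n) -> 0 < q ->
  in_lp q w x -> in_linf w x /\ (forall n, Rabs (x n) / w n <= linf_norm w x) /\
  linf_norm w x <= rpow (/ w 0%nat) (/ q) * lp_norm q w x.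
Proof.
  intros Hw Hw0 Hq Hx. apply linf_of_bound; auto. intros n; apply y_bound; auto.
Qed.

Lemma emb q r w : (forall n, 0 < w n) -> (forall n, w 0%nat <= w n) -> 0 < q -> q <= r ->
  cont_embed (in_lp q w) (lp_norm q w) (in_lp r w) (lp_norm r w).
Proof.
  intros Hw Hw0 Hq Hqr.
  set (K := rpow (/ w 0%nat) (/ q)).
  assert (HK : 0 <= K) by apply rpow_ge0.
  assert (H : forall x, in_lp q w x -> in_lp r w x /\
             lp_norm r w x <= rpow K (1 - q / r) * lp_norm q w x).
  { intros x Hx.
    destruct (interp q r w x (K * lp_norm q w x) Hw Hq Hqr Hx) as [H1 H2].
    - apply Rmult_le_pos; auto; apply lp_norm_ge0.
    - intros n; apply y_bound; auto.
    - split; auto. eapply Rle_trans; [apply H2|].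
      rewrite rpow_mult; auto; [|apply lp_norm_ge0].
      rewrite Rmult_assoc, <- rpow_plus; [|apply lp_norm_ge0].
      replace (1 - q / r + q / r) with 1 by ring. rewrite rpow_1; [lra|apply lp_norm_ge0]. }
  split; [intros x Hx; apply H; auto|].
  exists (rpow K (1 - q / r)); split; [apply rpow_ge0|]. intros x Hx; apply H; auto.
Qed.

Lemma ext_nb (h : R -> R) (D : R -> Prop) x l : filterlim h (within D (locally x)) (locally l) ->
  exists d, 0 < d /\ forall y, Rabs (y - x) < d -> D y -> Rabs (h y - l) < 1.
Proof.
  intros H. assert (H1 := H (ball l (mkposreal 1 Rlt_0_1)) (locally_ball l _)).
  destruct H1 as [eps Heps]. exists eps; split; [apply cond_pos|]. intros y Hy HD.
  apply (Heps y Hy HD).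
Qed.

Lemma f_loclip f : C1_nonneg f -> forall u0, 0 <= u0 ->
  exists d L, 0 < d /\ 0 < L /\ forall u, 0 <= u -> Rabs (u - u0) < d -> Rabs (f u - f u0) <= L * Rabs (u - u0).
Proof.
  intros [df [Hd _]] u0 Hu0.
  destruct (ext_nb _ _ _ _ (Hd u0 Hu0)) as [d [Hdp Hd1]].
  exists d, (Rabs (df u0) + 1). split; auto. split; [pose proof (Rabs_pos (df u0)); lra|].
  intros u Hu Hud. destruct (Req_dec u u0) as [->|Hne].
  { unfold Rminus; rewrite !Rplus_opp_r, Rabs_R0; lra. }
  specialize (Hd1 u Hud (conj Hu Hne)).
  set (qq := (f u - f u0) / (u - u0)) in *.
  assert (E : f u - f u0 = qq * (u - u0)) by (unfold qq; field; lra).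
  rewrite E, Rabs_mult. apply Rmult_le_compat_r; [apply Rabs_pos|].
  pose proof (Rabs_triang_inv qq (df u0)). lra.
Qed.

Lemma f_cont f : C1_nonneg f -> forall u0, 0 <= u0 -> forall eta, 0 < eta ->
  exists d, 0 < d /\ forall u, 0 <= u -> Rabs (u - u0) < d -> Rabs (f u - f u0) < eta.
Proof.
  intros Hf u0 Hu0 eta Heta. destruct (f_loclip f Hf u0 Hu0) as [d [L [Hd [HL H]]]].
  exists (Rmin d (eta / L)). split; [apply Rmin_pos; auto; apply Rdiv_lt_0_compat; auto|].
  intros u Hu Hud. eapply Rle_lt_trans; [apply H; auto; eapply Rlt_le_trans; [exact Hud| apply Rmin_l]|].
  assert (Rabs (u - u0) < eta / L) by (eapply Rlt_le_trans; [exact Hud| apply Rmin_r]).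
  apply Rmult_lt_compat_l with (r := L) in H0; auto.
  replace (L * (eta / L)) with eta in H0 by (field; lra). lra.
Qed.

Lemma f01 f : (forall x, 0 <= x -> 0 <= f x) -> (forall x y, 0 <= x <= y -> f y <= f x) -> f 0 = 1 ->
  forall u, 0 <= u -> 0 <= f u <= 1.
Proof. intros H1 H2 H3 u Hu. split; auto. rewrite <- H3. apply H2; lra. Qed.

Lemma f_lip0 f : C1_nonneg f -> (forall x, 0 <= x -> 0 <= f x) -> (forall x y, 0 <= x <= y -> f y <= f x) -> f 0 = 1 ->
  exists K, 0 < K /\ forall u, 0 <= u -> Rabs (f u - 1) <= K * u.
Proof.
  intros Hf H1 H2 H3. destruct (f_loclip f Hf 0 (Rle_refl 0)) as [d [L [Hd [HL H]]]].
  exists (L + / d). split; [pose proof (Rinv_0_lt_compat d Hd); lra|].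
  intros u Hu. rewrite <- H3. pose proof (Rinv_0_lt_compat d Hd).
  destruct (Rlt_le_dec u d) as [Hlt|Hge].
  - specialize (H u Hu). rewrite Rminus_0_r, Rabs_pos_eq in H by lra. specialize (H Hlt). nra.
  - pose proof (f01 f H1 H2 H3 u Hu). rewrite H3, Rabs_left1 by lra.
    assert (1 <= / d * u).
    { apply Rmult_le_reg_l with d; auto. rewrite <- Rmult_assoc, Rinv_r by lra. lra. }
    nra.
Qed.

Lemma mult_contr q w x (m : nat -> R) : 0 < q -> (forall n, Rabs (m n) <= 1) -> in_lp q w x ->
  in_lp q w (fun n => m n * x n) /\ lp_norm q w (fun n => m n * x n) <= lp_norm q w x.
Proof.
  intros Hq Hm Hx.
  assert (Hpt : forall n, lp_term q w (fun n => m n * x n) n <= lp_term q w x n).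
  { intros n; unfold lp_term. apply Rmult_le_compat_l; [left; apply Rpower_gt0|].
    apply rpow_le; [lra|]. rewrite Rabs_mult. split; [apply Rmult_le_pos; apply Rabs_pos|].
    pose proof (Hm n); pose proof (Rabs_pos (x n)); pose proof (Rabs_pos (m n)); nra. }
  assert (Hin : in_lp q w (fun n => m n * x n)).
  { unfold in_lp. apply (ex_series_le (lp_term q w (fun n => m n * x n)) (lp_term q w x)); [|exact Hx].
    intros n. change norm with Rabs; simpl. rewrite Rabs_pos_eq by apply lp_term_ge0. apply Hpt. }
  split; auto. unfold lp_norm. apply rpow_le; [left; apply Rinv_0_lt_compat; auto|].
  split; [apply Series_lp_ge0; auto|]. apply Series_le; auto. intros n; split; [apply lp_term_ge0|apply Hpt].
Qed.

Lemma opnorm_le memA nA memB nB T c : 0 <= c -> op_bounded_by memA nA memB nB T c ->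
  Rbar_le (opnorm memA nA memB nB T) c.
Proof.
  intros Hc Hb. unfold opnorm. destruct (Glb_Rbar_correct (fun c => 0 <= c /\ op_bounded_by memA nA memB nB T c)) as [H1 _].
  apply H1. auto.
Qed.

Lemma opnorm_fin memA nA memB nB T c : 0 <= c -> op_bounded_by memA nA memB nB T c ->
  is_finite (opnorm memA nA memB nB T) /\ 0 <= real (opnorm memA nA memB nB T) <= c.
Proof.
  intros Hc Hb. pose proof (opnorm_le _ _ _ _ _ _ Hc Hb) as H1.
  assert (H2 : Rbar_le 0 (opnorm memA nA memB nB T)).
  { unfold opnorm. destruct (Glb_Rbar_correct (fun c => 0 <= c /\ op_bounded_by memA nA memB nB T c)) as [_ H].
    apply H. intros c' [Hc' _]. simpl; auto. }
  destruct (opnorm memA nA memB nB T); simpl in *; try tauto.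
  split; [reflexivity| auto].
Qed.

Lemma finite_sum_cont (F : nat -> R -> R) (Pd : R -> Prop) t :
  (forall n eta, 0 < eta -> exists d, 0 < d /\ forall t', Pd t' -> Rabs (t' - t) < d -> F n t' < eta) ->
  forall N eta, 0 < eta -> exists d, 0 < d /\ forall t', Pd t' -> Rabs (t' - t) < d -> sum_f_R0 (fun n => F n t') N < eta.
Proof.
  intros H N. induction N as [|N IH]; intros eta Heta.
  - destruct (H 0%nat eta Heta) as [d [Hd Hd']]. exists d; split; auto.
  - destruct (IH (eta/2) ltac:(lra)) as [d1 [Hd1 H1]].
    destruct (H (S N) (eta/2) ltac:(lra)) as [d2 [Hd2 H2]].
    exists (Rmin d1 d2); split; [apply Rmin_pos; auto|].
    intros t' Ht' Hd. simpl.
    assert (Rabs (t' - t) < d1) by (eapply Rlt_le_trans; [exact Hd|apply Rmin_l]).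
    assert (Rabs (t' - t) < d2) by (eapply Rlt_le_trans; [exact Hd|apply Rmin_r]).
    specialize (H1 t' Ht' H0). specialize (H2 t' Ht' H3). lra.
Qed.

Lemma Rpower_cont y t : 0 < t -> forall eps, 0 < eps ->
  exists d, 0 < d /\ forall t', 0 < t' -> Rabs (t' - t) < d -> Rabs (Rpower t' y - Rpower t y) < eps.
Proof.
  intros Ht eps Heps.
  assert (Hc : continuity_pt (fun x => Rpower x y) t).
  { apply derivable_continuous_pt. exists (y * Rpower t (y - 1)). apply derivable_pt_lim_power; auto. }
  destruct (Hc eps Heps) as [d [Hd H]]. exists d; split; auto.
  intros t' Ht' Hdt. destruct (Req_dec t' t) as [->|Hne].
  { unfold Rminus; rewrite Rplus_opp_r, Rabs_R0; auto. }
  apply (H t'). split; [split; [exact I| auto]| exact Hdt].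
Qed.

Lemma tail_small a eta : ex_series a -> 0 < eta -> exists N, Series a - sum_f_R0 a N < eta.
Proof.
  intros Ha Heta. pose proof (Series_correct a Ha) as H.
  apply is_series_Reals in H. destruct (H eta Heta) as [N HN].
  exists N. specialize (HN N (le_n N)). unfold R_dist in HN.
  rewrite Rabs_minus_sym in HN. pose proof (Rle_abs (Series a - sum_f_R0 a N)). lra.
Qed.

Lemma series_split_bound D a N : (forall n, 0 <= D n <= a n) -> ex_series a ->
  ex_series D /\ Series D <= sum_f_R0 D N + (Series a - sum_f_R0 a N).
Proof.
  intros H Ha.
  assert (HD : ex_series D).
  { apply (ex_series_le D a); auto. intros n; change norm with Rabs; simpl.
    rewrite Rabs_pos_eq; apply H. }
  split; auto.
  rewrite (Series_incr_n D (S N)), (Series_incr_n a (S N)); try lia; auto. simpl.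
  assert (Series (fun k => D (S (N + k))) <= Series (fun k => a (S (N + k)))).
  { apply Series_le; [intros; apply H|]. apply (ex_series_incr_n a (S N)) in Ha. exact Ha. }
  lra.
Qed.

Lemma Pcont p w f x t eps : 1 < p -> (forall n, 0 < w n) -> C1_nonneg f ->
  (forall u, 0 <= u -> 0 <= f u <= 1) -> in_lp p w x -> 0 < t -> 0 < eps ->
  exists d, 0 < d /\ forall t', 0 < t' -> Rabs (t' - t) < d ->
    lp_norm p w (fun n => P_op f w p t' x n - P_op f w p t x n) < eps.
Proof.
  intros Hp Hw Hf Hf01 Hx Ht Heps.
  set (e := a_exp p + 1).
  set (g := fun n t' => f (Rpower t' e * w n)).
  set (D := fun n t' => lp_term p w (fun n => P_op f w p t' x n - P_op f w p t x n) n).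
  assert (HD : forall n t', D n t' = rpow (Rabs (g n t' - g n t)) p * lp_term p w x n).
  { intros n t'. unfold D, lp_term, P_op, g. fold e.
    replace (f (Rpower t' e * w n) * x n - f (Rpower t e * w n) * x n)
      with ((f (Rpower t' e * w n) - f (Rpower t e * w n)) * x n) by ring.
    rewrite Rabs_mult, rpow_mult by apply Rabs_pos. ring. }
  assert (Hg01 : forall n t', 0 < t' -> 0 <= g n t' <= 1).
  { intros n t' Ht'. unfold g. apply Hf01. apply Rmult_le_pos; [left; apply Rpower_gt0| left; auto]. }
  assert (Hdom : forall t', 0 < t' -> forall n, 0 <= D n t' <= lp_term p w x n).
  { intros t' Ht' n. rewrite HD. pose proof (lp_term_ge0 p w x n).
    assert (Hz : 0 <= Rabs (g n t' - g n t) <= 1).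
    { split; [apply Rabs_pos|]. pose proof (Hg01 n t' Ht'); pose proof (Hg01 n t Ht).
      apply Rabs_le; lra. }
    pose proof (rpow_le_self _ p Hz ltac:(lra)). pose proof (rpow_ge0 (Rabs (g n t' - g n t)) p).
    split; [apply Rmult_le_pos; auto|]. nra. }
  set (eta := rpow eps p).
  assert (Heta : 0 < eta) by (apply rpow_gt0; auto).
  destruct (tail_small (lp_term p w x) (eta / 2) Hx ltac:(lra)) as [N HN].
  assert (Hhead : forall n eta', 0 < eta' -> exists d, 0 < d /\ forall t', 0 < t' -> Rabs (t' - t) < d -> D n t' < eta').
  { intros n eta' Heta'.
    set (c := lp_term p w x n). assert (Hc : 0 <= c) by apply lp_term_ge0.
    set (rho := rpow (eta' / (c + 1)) (/ p)).
    assert (Hrho : 0 < rho) by (apply rpow_gt0; apply Rdiv_lt_0_compat; lra).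
    assert (Hrp : rpow rho p = eta' / (c + 1)).
    { unfold rho. rewrite rpow_rpow by (left; apply Rdiv_lt_0_compat; lra).
      rewrite Rinv_l by lra. apply rpow_1. left; apply Rdiv_lt_0_compat; lra. }
    set (u0 := Rpower t e * w n).
    assert (Hu0 : 0 <= u0) by (apply Rmult_le_pos; [left; apply Rpower_gt0| left; auto]).
    destruct (f_cont f Hf u0 Hu0 rho Hrho) as [d1 [Hd1 H1]].
    pose proof (Hw n) as Hwn.
    destruct (Rpower_cont e t Ht (d1 / w n) ltac:(apply Rdiv_lt_0_compat; lra)) as [d2 [Hd2 H2]].
    exists d2; split; auto. intros t' Ht' Htd.
    specialize (H2 t' Ht' Htd).
    assert (Hu : Rabs (Rpower t' e * w n - u0) < d1).
    { unfold u0. replace (Rpower t' e * w n - Rpower t e * w n) with ((Rpower t' e - Rpower t e) * w n) by ring.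
      rewrite Rabs_mult, (Rabs_pos_eq (w n)) by lra.
      apply Rmult_lt_compat_r with (r := w n) in H2; auto.
      replace (d1 / w n * w n) with d1 in H2 by (field; lra). exact H2. }
    specialize (H1 _ (ltac:(apply Rmult_le_pos; [left; apply Rpower_gt0| left; auto])) Hu).
    rewrite HD. fold c.
    assert (rpow (Rabs (g n t' - g n t)) p <= eta' / (c + 1)).
    { rewrite <- Hrp. apply rpow_le; [lra|]. split; [apply Rabs_pos|]. left. exact H1. }
    assert (eta' / (c + 1) * c < eta').
    { apply Rmult_lt_reg_r with (c + 1); [lra|]. unfold Rdiv.
      replace (eta' * / (c + 1) * c * (c + 1)) with (eta' * c) by (field; lra). nra. }
    pose proof (rpow_ge0 (Rabs (g n t' - g n t)) p). nra. }
  destruct (finite_sum_cont D (fun t' => 0 < t') t Hhead N (eta / 2) ltac:(lra)) as [d [Hd Hsum]].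
  exists d; split; auto. intros t' Ht' Htd.
  destruct (series_split_bound (fun n => D n t') (lp_term p w x) N (Hdom t' Ht') Hx) as [HexD HSD].
  specialize (Hsum t' Ht' Htd).
  assert (HS : Series (fun n => D n t') < eta) by lra.
  unfold lp_norm. fold (D 0%nat t').
  change (Series (lp_term p w (fun n => P_op f w p t' x n - P_op f w p t x n))) with (Series (fun n => D n t')).
  rewrite <- (rpow_inv eps p); [|lra|lra].
  apply rpow_lt; [apply Rinv_0_lt_compat; lra|]. split; auto.
  apply Series_ge0; auto. intros n; apply Hdom; auto.
Qed.

Lemma v1 f w q x tau K n : (forall n, 0 < w n) -> 1 <= q -> 0 < tau -> 0 < K ->
  (forall u, 0 <= u -> 0 <= f u <= 1) -> (forall u, 0 <= u -> Rabs (f u - 1) <= K * u) ->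
  in_lp q w x ->
  Rabs (f (tau * w n) * x n - x n) / w n <= rpow (K * tau) (/ q) * lp_norm q w x.
Proof.
  intros Hw Hq Ht HK Hf01 HfK Hx. pose proof (Hw n) as Hwn.
  assert (Hu : 0 <= tau * w n) by (apply Rmult_le_pos; lra).
  set (z := Rabs (f (tau * w n) - 1)).
  set (y := Rabs (x n) / w n).
  assert (Hy : 0 <= y) by (apply y_ge0; auto).
  assert (Hz : 0 <= z <= 1).
  { split; [apply Rabs_pos|]. pose proof (Hf01 _ Hu). unfold z; apply Rabs_le; lra. }
  assert (HzK : z <= K * tau * w n) by (unfold z; rewrite Rmult_assoc; apply HfK; auto).
  assert (E : Rabs (f (tau * w n) * x n - x n) / w n = z * y).
  { unfold z, y. replace (f (tau * w n) * x n - x n) with ((f (tau * w n) - 1) * x n) by ring.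
    rewrite Rabs_mult. unfold Rdiv; ring. }
  rewrite E.
  set (S := Series (lp_term q w x)).
  assert (HS : 0 <= S) by (apply Series_lp_ge0; auto).
  pose proof (term_le_Series (lp_term q w x) n (lp_term_ge0 q w x) Hx) as Ht1.
  rewrite lp_term_eq in Ht1 by auto. fold y S in Ht1.
  assert (Hb : rpow (z * y) q <= K * tau * S).
  { rewrite rpow_mult by lra.
    pose proof (rpow_le_self z q Hz Hq). pose proof (rpow_ge0 y q). pose proof (rpow_ge0 z q).
    apply Rle_trans with (z * rpow y q); [nra|].
    apply Rle_trans with (K * tau * w n * rpow y q); [nra|].
    assert (0 <= K * tau) by nra. nra. }
  rewrite <- (rpow_inv (z * y) q) by (try apply Rmult_le_pos; lra).
  unfold lp_norm; fold S. rewrite <- rpow_mult by nra.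
  apply rpow_le; [left; apply Rinv_0_lt_compat; lra|]. split; auto. apply rpow_ge0.
Qed.

Lemma Rpower_anti y l e : 0 < l <= y -> e <= 0 -> Rpower y e <= Rpower l e.
Proof.
  intros Hl He. unfold Rpower.
  assert (ln l <= ln y) by (destruct (Req_dec l y) as [->|]; [lra| left; apply ln_increasing; lra]).
  assert (e * ln y <= e * ln l) by nra.
  destruct H0 as [H0|H0]; [left; apply exp_increasing; auto| rewrite H0; lra].
Qed.

Lemma v2 f w q x tau A lam : (forall n, 0 < w n) -> 1 < q -> 0 < lam -> 0 <= tau ->
  (forall u, 0 <= u -> 0 <= f u <= 1) ->
  ex_series (fun n => w n * f (tau * w n)) -> Series (fun n => w n * f (tau * w n)) <= A ->
  in_lp q w x ->
  in_l1 (fun n => f (tau * w n) * x n) /\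
  l1_norm (fun n => f (tau * w n) * x n) <= lam * A + Rpower lam (1 - q) * Series (lp_term q w x).
Proof.
  intros Hw Hq Hl Ht Hf01 Hex HA Hx.
  assert (Hpt : forall n, Rabs (f (tau * w n) * x n) <=
      lam * (w n * f (tau * w n)) + Rpower lam (1 - q) * lp_term q w x n).
  { intros n. pose proof (Hw n) as Hwn.
    assert (Hu : 0 <= tau * w n) by (apply Rmult_le_pos; lra).
    pose proof (Hf01 _ Hu) as Hfu. set (fu := f (tau * w n)) in *.
    rewrite lp_term_eq by auto. set (y := Rabs (x n) / w n).
    assert (Hy : 0 <= y) by (apply y_ge0; auto).
    assert (Ex : Rabs (fu * x n) = w n * (fu * y)).
    { rewrite Rabs_mult, Rabs_pos_eq by lra. unfold y; field; lra. }
    rewrite Ex.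
    assert (Hc : fu * y <= lam * fu + Rpower lam (1 - q) * rpow y q).
    { pose proof (rpow_ge0 y q). pose proof (Rpower_gt0 lam (1 - q)).
      destruct (Rle_lt_dec y lam) as [Hyl|Hyl].
      - nra.
      - assert (Hy0 : 0 < y) by lra.
        assert (Ey : y = rpow y q * Rpower y (1 - q)).
        { rewrite rpow_pos by lra. rewrite <- Rpower_plus. replace (q + (1 - q)) with 1 by ring.
          rewrite Rpower_1; lra. }
        pose proof (Rpower_anti y lam (1 - q) ltac:(lra) ltac:(lra)).
        assert (fu * y <= y) by nra.
        assert (y <= rpow y q * Rpower lam (1 - q)) by (rewrite Ey at 1; apply Rmult_le_compat_l; auto).
        pose proof (Rmult_le_pos _ _ (Rlt_le _ _ Hl) (proj1 Hfu)). nra. }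
    assert (w n * (fu * y) <= w n * (lam * fu + Rpower lam (1 - q) * rpow y q)) by (apply Rmult_le_compat_l; lra).
    lra. }
  assert (Hexb : ex_series (fun n => lam * (w n * f (tau * w n)) + Rpower lam (1 - q) * lp_term q w x n)).
  { apply (ex_series_plus (fun n => lam * (w n * f (tau * w n))) (fun n => Rpower lam (1 - q) * lp_term q w x n)).
    - apply (ex_series_scal_l lam) in Hex. exact Hex.
    - apply (ex_series_scal_l (Rpower lam (1 - q))) in Hx. exact Hx. }
  assert (Hin : in_l1 (fun n => f (tau * w n) * x n)).
  { unfold in_l1. apply (ex_series_le (fun n => Rabs (f (tau * w n) * x n)) (fun n => lam * (w n * f (tau * w n)) + Rpower lam (1 - q) * lp_term q w x n)); [|exact Hexb].
    intros n. change norm with Rabs; simpl. rewrite Rabs_Rabsolu. apply Hpt. }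
  split; auto. unfold l1_norm.
  eapply Rle_trans; [apply Series_le; [|exact Hexb]|].
  { intros n; split; [apply Rabs_pos| apply Hpt]. }
  rewrite Series_plus.
  - rewrite !Series_scal_l. pose proof (Rpower_gt0 lam (1 - q)). nra.
  - apply (ex_series_scal_l lam) in Hex. exact Hex.
  - apply (ex_series_scal_l (Rpower lam (1 - q))) in Hx. exact Hx.
Qed.

Lemma young_eq A S q : 0 < A -> 0 < S -> q <> 0 ->
  Rpower (S / A) (/ q) * A + Rpower (Rpower (S / A) (/ q)) (1 - q) * S = 2 * (Rpower A (1 - / q) * Rpower S (/ q)).
Proof.
  intros HA HS Hq. rewrite Rpower_mult. unfold Rpower.
  unfold Rdiv; rewrite ln_mult, ln_Rinv by (try apply Rinv_0_lt_compat; lra).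
  rewrite <- (exp_ln A) at 2; auto. rewrite <- (exp_ln S) at 3; auto.
  rewrite <- !exp_plus.
  replace (/ q * (ln S + - ln A) + ln A) with ((1 - / q) * ln A + / q * ln S) by (field; auto).
  replace (/ q * (1 - q) * (ln S + - ln A) + ln S) with ((1 - / q) * ln A + / q * ln S) by (field; auto).
  ring.
Qed.

Lemma v2b f w q x tau A : (forall n, 0 < w n) -> 1 < q -> 0 <= tau -> 0 < A ->
  (forall u, 0 <= u -> 0 <= f u <= 1) ->
  ex_series (fun n => w n * f (tau * w n)) -> Series (fun n => w n * f (tau * w n)) <= A ->
  in_lp q w x ->
  in_l1 (fun n => f (tau * w n) * x n) /\
  l1_norm (fun n => f (tau * w n) * x n) <= 2 * Rpower A (1 - / q) * lp_norm q w x.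
Proof.
  intros Hw Hq Ht HA Hf01 Hex HSA Hx.
  pose proof (fun lam Hl => v2 f w q x tau A lam Hw Hq Hl Ht Hf01 Hex HSA Hx) as H.
  destruct (H 1 Rlt_0_1) as [Hin _]. split; auto.
  set (S := Series (lp_term q w x)) in *.
  assert (HS : 0 <= S) by (apply Series_lp_ge0; auto).
  unfold lp_norm; fold S.
  destruct HS as [HS|HS].
  - destruct (H (Rpower (S / A) (/ q)) (Rpower_gt0 _ _)) as [_ H2].
    rewrite young_eq in H2 by lra. rewrite rpow_pos by auto. lra.
  - rewrite <- HS, rpow_0, Rmult_0_r.
    set (L := l1_norm (fun n => f (tau * w n) * x n)).
    destruct (Rle_lt_dec L 0) as [|HL]; auto.
    destruct (H (L / (2 * A)) ltac:(apply Rdiv_lt_0_compat; lra)) as [_ H2].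
    fold L in H2. rewrite <- HS, Rmult_0_r, Rplus_0_r in H2.
    replace (L / (2 * A) * A) with (L / 2) in H2 by (field; lra). lra.
Qed.

Lemma ps_pos p s : 1 < p -> 0 <= s -> 0 < p_s p s.
Proof. intros; unfold p_s; apply Rdiv_lt_0_compat; nra. Qed.

Lemma ps_mono p s t : 1 < p -> 0 <= t <= s -> p_s p s <= p_s p t.
Proof.
  intros Hp Hts; unfold p_s, Rdiv. apply Rmult_le_compat_l; [lra|].
  apply Rinv_le_contravar; nra.
Qed.

Lemma ps_gt1 p s : 1 < p -> 0 <= s < 1 -> 1 < p_s p s.
Proof.
  intros Hp Hs; unfold p_s. apply Rmult_lt_reg_r with (1 + s * (p - 1)); [nra|].
  unfold Rdiv; rewrite Rmult_assoc, Rinv_l by nra. nra.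
Qed.

Lemma ps_exp p s : 1 < p -> 0 <= s -> (a_exp p + 1) * / p_s p s = a_exp p + s.
Proof. intros Hp Hs; unfold p_s, a_exp. field. split; nra. Qed.

Lemma l1_eq w x : (forall n, 0 < w n) -> (in_l1 x <-> in_lp 1 w x) /\ (in_l1 x -> l1_norm x = lp_norm 1 w x).
Proof.
  intros Hw.
  assert (E : forall n, lp_term 1 w x n = Rabs (x n)).
  { intros n; unfold lp_term. replace (1 - 1) with 0 by ring. rewrite Rpower_O by auto.
    rewrite rpow_1 by apply Rabs_pos. ring. }
  split; [split; intros H; unfold in_lp, in_l1 in *; eapply ex_series_ext; try exact H; intros n; rewrite E; auto|].
  intros H. unfold lp_norm, l1_norm. rewrite (Series_ext _ _ E). rewrite Rinv_1, rpow_1; auto.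
  apply Series_ge0; auto. intros; apply Rabs_pos.
Qed.
Theorem proposition1 (p : R) (w : nat -> R) (f : R -> R) (tau0 Cw : R) :
  1 < p ->
  (forall n, 0 < w n) ->
  (forall n1 n2 : nat, (n1 < n2)%nat -> w n1 <= w n2) ->
  is_lim_seq w p_infty ->
  C1_nonneg f ->
  (forall x, 0 <= x -> 0 <= f x) ->
  (forall x y, 0 <= x <= y -> f y <= f x) ->
  f 0 = 1 ->
  0 < tau0 -> 0 < Cw ->
  (forall tau, 0 < tau <= tau0 ->
     ex_series (fun n => w n * f (tau * w n)) /\
     Series (fun n => w n * f (tau * w n)) <= Cw / tau) ->
  let a := a_exp p in
  let t0 := t0_of p tau0 in
  (* (i) *)
  (cont_embed in_l1 l1_norm (in_lp p w) (lp_norm p w) /\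
   cont_embed (in_lp p w) (lp_norm p w) (in_linf w) (linf_norm w)) /\
  (* (ii) *)
  ((forall x, in_lp (p_s p 0) w x <-> in_lp p w x) /\
   (forall x, in_lp p w x -> lp_norm (p_s p 0) w x = lp_norm p w x) /\
   (forall x, in_lp (p_s p 1) w x <-> in_l1 x) /\
   (forall x, in_l1 x -> lp_norm (p_s p 1) w x = l1_norm x) /\
   (forall s t, 0 <= t <= s -> s <= 1 ->
      cont_embed (in_lp (p_s p s) w) (lp_norm (p_s p s) w)
                 (in_lp (p_s p t) w) (lp_norm (p_s p t) w))) /\
  (* (iii) *)
  (forall s r, 0 < s <= 1 -> 0 <= r < s ->
     exists L, 0 < L /\
       forall x, in_lp (p_s p s) w x ->
         lp_norm (p_s p r) w x <=
           L * rpow (lp_norm (p_s p s) w x) ((r + a) / (a + s))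
             * rpow (linf_norm w x) ((s - r) / (a + s))) /\
  (* (iv) *)
  ((forall s, 0 <= s <= 1 ->
      (forall t, 0 < t <= t0 -> forall x,
         in_lp (p_s p s) w x -> in_lp (p_s p s) w (P_op f w p t x)) /\
      (forall t, 0 < t <= t0 ->
         is_finite (opnorm (in_lp (p_s p s) w) (lp_norm (p_s p s) w)
                           (in_lp (p_s p s) w) (lp_norm (p_s p s) w)
                           (P_op f w p t))) /\
      is_finite (CP_sup f w p t0 s)) /\
   (forall x, in_lp p w x ->
      forall t, 0 < t <= t0 -> forall eps, 0 < eps ->
        exists delta, 0 < delta /\
          forall t', 0 < t' <= t0 -> Rabs (t' - t) < delta ->
            lp_norm p w (fun n => P_op f w p t' x n - P_op f w p t x n) < eps)) /\
  (* (v) *)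
  (forall s, 0 < s < 1 ->
     exists CProj, real (CP_sup f w p t0 s) + 1 <= CProj /\
       forall t, 0 < t <= t0 ->
         Rbar_le (opnorm (in_lp (p_s p s) w) (lp_norm (p_s p s) w)
                         (in_linf w) (linf_norm w)
                         (fun x n => P_op f w p t x n - x n))
                 (CProj * rpow t (a + s)) /\
         Rbar_le (opnorm (in_lp (p_s p s) w) (lp_norm (p_s p s) w)
                         in_l1 l1_norm (P_op f w p t))
                 (CProj * rpow t (s - 1))).
Proof.
  intros Hp Hw Hmono Hlim Hf Hfnn Hfdec Hf0 Htau0 HCw Hsum a t0.
  assert (Hw0 : forall n, w 0%nat <= w n).
  { intros [|n]; [lra| apply Hmono; lia]. }
  pose proof (f01 f Hfnn Hfdec Hf0) as Hf01.
  assert (Ha : 0 < a) by (unfold a, a_exp; apply Rinv_0_lt_compat; lra).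
  assert (Ht0 : 0 < t0) by (unfold t0, t0_of; apply Rpower_gt0).
  assert (Htau : forall t, 0 < t <= t0 -> 0 < Rpower t (a + 1) <= tau0).
  { intros t [Ht Htt]. split; [apply Rpower_gt0|].
    apply Rle_trans with (Rpower t0 (a + 1)); [apply Rle_Rpower_l; lra|].
    unfold t0, t0_of. rewrite Rpower_mult. fold a. replace (/ (1 + a) * (a + 1)) with 1 by (field; lra).
    rewrite Rpower_1; lra. }
  split; [|split; [|split; [|split]]].
  -
    split.
    + destruct (emb 1 p w Hw Hw0 Rlt_0_1 ltac:(lra)) as [H1 [C [HC H2]]].
      split; [intros x Hx; apply H1, l1_eq; auto|].
      exists C; split; auto. intros x Hx. rewrite (proj2 (l1_eq w x Hw) Hx). apply H2, l1_eq; auto.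
    + split; [intros x Hx; apply (linf_of_lp p w x Hw Hw0 ltac:(lra) Hx)|].
      exists (rpow (/ w 0%nat) (/ p)); split; [apply rpow_ge0|].
      intros x Hx; apply (linf_of_lp p w x Hw Hw0 ltac:(lra) Hx).
  -
    assert (E0 : p_s p 0 = p) by (unfold p_s; field; lra).
    assert (E1 : p_s p 1 = 1) by (unfold p_s; field; lra).
    rewrite E0, E1. split; [tauto|]. split; [auto|]. split; [intros x; split; apply l1_eq; auto|].
    split; [intros x Hx; symmetry; apply l1_eq; auto|].
    intros s t Hts Hs1. apply emb; auto; [apply ps_pos; lra| apply ps_mono; lra].
  -
    intros s r Hs Hr. exists 1; split; [lra|]. intros x Hx.
    set (qs := p_s p s). set (qr := p_s p r).
    assert (Hqs : 0 < qs) by (apply ps_pos; lra).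
    assert (Hqsr : qs <= qr) by (apply ps_mono; lra).
    destruct (linf_of_lp qs w x Hw Hw0 Hqs Hx) as [_ [Hy _]].
    assert (HM : 0 <= linf_norm w x) by (eapply Rle_trans; [apply (y_ge0 x w 0%nat (Hw 0%nat))| apply Hy]).
    destruct (interp qs qr w x (linf_norm w x) Hw Hqs Hqsr Hx HM Hy) as [_ H].
    assert (Ee1 : 1 - qs / qr = (s - r) / (a + s)).
    { unfold qs, qr, p_s, a, a_exp. field. repeat split; nra. }
    assert (Ee2 : qs / qr = (r + a) / (a + s)).
    { unfold qs, qr, p_s, a, a_exp. field. repeat split; nra. }
    rewrite Ee1, Ee2 in H. lra.
  -
    split.
    + intros s Hs. set (q := p_s p s).
      assert (Hq : 0 < q) by (apply ps_pos; lra).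
      assert (Hb : forall t, 0 < t <= t0 ->
        op_bounded_by (in_lp q w) (lp_norm q w) (in_lp q w) (lp_norm q w) (P_op f w p t) 1).
      { intros t Ht x Hx. rewrite Rmult_1_l.
        apply (mult_contr q w x (fun n => f (Rpower t (a_exp p + 1) * w n)) Hq); auto.
        intros n. pose proof (Hw n). pose proof (Rpower_gt0 t (a_exp p + 1)).
        assert (0 <= Rpower t (a_exp p + 1) * w n) by (apply Rmult_le_pos; lra).
        pose proof (Hf01 _ H1). rewrite Rabs_pos_eq; lra. }
      split; [intros t Ht x Hx; apply (Hb t Ht x Hx)|].
      split; [intros t Ht; apply (opnorm_fin _ _ _ _ _ 1 ltac:(lra) (Hb t Ht))|].
      unfold CP_sup. fold q.
      set (E := fun c => exists t, 0 < t <= t0 /\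
         opnorm (in_lp q w) (lp_norm q w) (in_lp q w) (lp_norm q w) (P_op f w p t) = Finite c).
      assert (HE : forall c, E c -> 0 <= c <= 1).
      { intros c [t [Ht Ho]]. destruct (opnorm_fin _ _ _ _ _ 1 ltac:(lra) (Hb t Ht)) as [_ H].
        rewrite Ho in H. simpl in H. exact H. }
      assert (HE0 : E (real (opnorm (in_lp q w) (lp_norm q w) (in_lp q w) (lp_norm q w) (P_op f w p t0)))).
      { exists t0; split; [lra|]. symmetry.
        apply (opnorm_fin _ _ _ _ _ 1 ltac:(lra) (Hb t0 ltac:(lra))). }
      destruct (Lub_Rbar_correct E) as [Hub Hlub].
      assert (H1 : Rbar_le (Lub_Rbar E) 1).
      { apply Hlub. intros c Hc. simpl. apply HE; auto. }
      assert (H2 := Hub _ HE0).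
      destruct (Lub_Rbar E); simpl in *; try tauto. reflexivity.
    + intros x Hx t Ht eps Heps.
      destruct (Pcont p w f x t eps Hp Hw Hf Hf01 Hx ltac:(lra) Heps) as [d [Hd H]].
      exists d; split; auto. intros t' Ht' Htd. apply H; auto; lra.
  -
    intros s Hs. set (q := p_s p s).
    assert (Hq1 : 1 < q) by (apply ps_gt1; lra).
    assert (Hexp : (a + 1) * / q = a + s) by (apply ps_exp; lra).
    destruct (f_lip0 f Hf Hfnn Hfdec Hf0) as [K [HK HfK]].
    set (C1 := rpow K (/ q)). set (C2 := 2 * Rpower Cw (1 - / q)).
    set (CProj := Rmax (real (CP_sup f w p t0 s) + 1) (Rmax C1 C2)).
    assert (HC1 : C1 <= CProj) by (unfold CProj; eapply Rle_trans; [apply Rmax_l| apply Rmax_r]).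
    assert (HC2 : C2 <= CProj) by (unfold CProj; eapply Rle_trans; [apply Rmax_r| apply Rmax_r]).
    assert (HC1p : 0 <= C1) by apply rpow_ge0.
    exists CProj; split; [apply Rmax_l|].
    intros t Ht. destruct (Htau t Ht) as [Htp Htt].
    set (tau := Rpower t (a + 1)) in *.
    split.
    + apply opnorm_le.
      { apply Rmult_le_pos; [lra| apply rpow_ge0]. }
      intros x Hx.
      assert (Hv : forall n, Rabs (P_op f w p t x n - x n) / w n <= C1 * rpow t (a + s) * lp_norm q w x).
      { intros n. unfold P_op. fold a. fold tau.
        eapply Rle_trans; [apply (v1 f w q x tau K n Hw ltac:(lra) Htp HK Hf01 HfK Hx)|].
        rewrite rpow_mult by lra. unfold C1. rewrite (rpow_pos tau) by lra. unfold tau.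
        rewrite Rpower_mult, Hexp, <- (rpow_pos t) by lra. lra. }
      destruct (linf_of_bound w _ _ Hw Hv) as [Hin [_ Hle]].
      split; auto. eapply Rle_trans; [exact Hle|].
      pose proof (lp_norm_ge0 q w x). pose proof (rpow_ge0 t (a + s)).
      assert (0 <= rpow t (a + s) * lp_norm q w x) by (apply Rmult_le_pos; auto).
      nra.
    + apply opnorm_le.
      { apply Rmult_le_pos; [pose proof (Rpower_gt0 Cw (1 - / q)); unfold C2 in HC2; lra| apply rpow_ge0]. }
      intros x Hx.
      destruct (Hsum tau (conj Htp Htt)) as [Hex HS].
      destruct (v2b f w q x tau (Cw / tau) Hw Hq1 ltac:(lra) ltac:(apply Rdiv_lt_0_compat; lra) Hf01 Hex HS Hx) as [Hin Hle].
      split; [exact Hin|].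
      assert (EA : Rpower (Cw / tau) (1 - / q) = Rpower Cw (1 - / q) * rpow t (s - 1)).
      { unfold Rdiv. rewrite <- Rpower_mult_distr by (try apply Rinv_0_lt_compat; lra).
        f_equal. rewrite rpow_pos by lra.
        assert (E1 : Rpower (/ tau) (1 - / q) = Rpower tau (- (1 - / q))).
        { unfold Rpower. rewrite ln_Rinv by lra. f_equal; ring. }
        rewrite E1. unfold tau. rewrite Rpower_mult. f_equal.
        replace ((a + 1) * - (1 - / q)) with (- (a + 1) + (a + 1) * / q) by ring.
        rewrite Hexp. ring. }
      change (P_op f w p t x) with (fun n => f (tau * w n) * x n).
      eapply Rle_trans; [exact Hle|]. rewrite EA.
      pose proof (lp_norm_ge0 q w x). pose proof (rpow_ge0 t (s - 1)).
      assert (0 <= rpow t (s - 1) * lp_norm q w x) by (apply Rmult_le_pos; auto).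
      unfold C2 in HC2. nra.
Qed.
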